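(* Let $(\frac pq,\frac rs)$ be a Farey pair of order $n$ with $q\ge 2$. Put $d=\lfloor n/q\rfloor$, $\delta=\gcd(d,s)$, $d=d_1\delta$, $s=s_1\delta$. Let $\alpha\in[0,1]$, $\beta=1-\alpha$, $j\in\{0,\dots,\delta-1\}$, and $$g_{\alpha,j}(t)=(t^q-\beta)^{d_1}-\alpha^{d_1}t^{qd_1-s_1}e^{2\pi i j/\delta},\qquad \hat g_{\alpha,j}(t)=t^{qd_1}-\beta-\alpha t^{qd_1-s_1}e^{2\pi i j/(\delta d_1)}.$$ If $\hat t_1,\dots,\hat t_N$ are the nonzero roots of $\hat g_{\alpha,j}$ listed with multiplicity, then $\hat t_1^{d_1},\dots,\hat t_N^{d_1}$ are the nonzero roots of $g_{\alpha,j}$ listed with multiplicity.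
   Context: $\mathcal{F}_n=\{p/q:0\le p<q\le n,\ \gcd(p,q)=1\}$; a Farey pair of order $n$ is a pair $(\frac pq,\frac rs)$ of elements of $\mathcal F_n$ with $\frac pq<\frac rs$ and no element of $\mathcal F_n$ strictly between them. $g_{\alpha,j}$ and $\hat g_{\alpha,j}$ are regarded as rational functions of $t$ (the exponent $qd_1-s_1$ may be negative). *)

(* Defs.v *)
From HB Require Import structures.
From mathcomp Require Import all_boot all_order all_algebra.
From mathcomp Require Import reals trigo.
From mathcomp Require Import complex.
Set Implicit Arguments. Unset Strict Implicit. Unset Printing Implicit Defensive.
Import Order.TTheory GRing.Theory Num.Theory.
Local Open Scope ring_scope.

Definition farey_elem (n p q : nat) : Prop := (p < q <= n)%N /\ coprime p q.

Definition fracQ (p q : nat) : rat := p%:R / q%:R.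

Definition farey_pair (n p q r s : nat) : Prop :=
  [/\ farey_elem n p q, farey_elem n r s, fracQ p q < fracQ r s &
      forall a b, farey_elem n a b -> ~ (fracQ p q < fracQ a b < fracQ r s)].

Definition expI (R : realType) (theta : R) : R[i] := (cos theta +i* sin theta)%C.

(* The rational function g_{alpha,j}(t) = (t^q-beta)^d1 - alpha^d1 t^(q d1 - s1) zeta
   is represented by the polynomial t^s1 * g_{alpha,j}(t) (note q*d1 - s1 + s1 >= 0);
   multiplying by t^s1 does not change nonzero roots nor their multiplicities. *)
Definition g_num (R : realType) (q d1 s1 : nat) (alpha : R) (zeta : R[i]) : {poly R[i]} :=
  'X^s1 * ('X^q - (real_complex _ (1 - alpha))%:P) ^+ d1
  - (real_complex _ (alpha ^+ d1) * zeta) *: 'X^(q * d1).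

(* t^s1 * ghat_{alpha,j}(t) = t^(q d1 + s1) - beta t^s1 - alpha t^(q d1) zeta' *)
Definition ghat_num (R : realType) (q d1 s1 : nat) (alpha : R) (zeta : R[i]) : {poly R[i]} :=
  'X^(q * d1 + s1) - real_complex _ (1 - alpha) *: 'X^s1 - (real_complex _ alpha * zeta) *: 'X^(q * d1).

(* Main.v *)
Require Import Defs.
From HB Require Import structures.
From mathcomp Require Import all_boot all_order all_algebra.
From mathcomp Require Import reals trigo.
From mathcomp Require Import complex.
From mathcomp Require Import ring lra.
Import Order.TTheory GRing.Theory Num.Theory.
Local Open Scope ring_scope.


Section Gen.
Variable F : numClosedFieldType.

Lemma poly_ext_horner (p q : {poly F}) : (forall x, p.[x] = q.[x]) -> p = q.
Proof.
move=> h; apply/eqP; rewrite -subr_eq0; apply/negPn/negP => nz.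
suff: (size [seq i%:R : F | i <- iota 0 (size (p - q)%R)] < size (p - q)%R)%N.
  by rewrite size_map size_iota ltnn.
apply: max_poly_roots => //.
  by apply/allP => x _; rewrite rootE hornerD hornerN h subrr.
rewrite map_inj_uniq ?iota_uniq // => i j /eqP; rewrite eqr_nat => /eqP.
done.
Qed.

Lemma mupX x (p : {poly F}) k : p != 0 -> mup x (p ^+ k) = (k * mup x p)%N.
Proof.
move=> pn0; elim: k => [|k IH]; first by rewrite expr0 mupNroot ?root1.
by rewrite exprS mupM ?expf_neq0 // IH mulSn.
Qed.

Lemma comp_poly_exp (p q : {poly F}) k : (p ^+ k) \Po q = (p \Po q) ^+ k.
Proof.
elim: k => [|k IH]; first by rewrite !expr0 comp_polyC.
by rewrite !exprS comp_polyM IH.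
Qed.

Lemma mup_comp (p q : {poly F}) u c : p != 0 -> q.[u] = c -> q - c%:P != 0 ->
  mup u (p \Po q) = (mup c p * mup u (q - c%:P))%N.
Proof.
move=> pn0 quc qc.
have [k [r]] := multiplicity_XsubC p c; rewrite pn0 /= => rc ->.
rewrite mupMr // mup_XsubCX eqxx comp_polyM mupMr.
  by rewrite comp_poly_exp comp_polyB comp_polyX comp_polyC mupX.
by rewrite /root horner_comp quc.
Qed.

End Gen.


Section Gen2.
Variable F : numClosedFieldType.

Lemma mup_Xn (u : F) m : u != 0 -> (0 < m)%N -> mup u ('X^m - (u ^+ m)%:P) = 1%N.
Proof.
move=> un0 m0.
rewrite (rmorphXn (@polyC F)) subrXX mupMl.
  by rewrite (@mup_XsubCX _ 1) eqxx.
rewrite /root horner_sum.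
rewrite (eq_bigr (fun _ => u ^+ m.-1)); last first.
  move=> i _; rewrite hornerM hornerXn horner_exp hornerC -exprD subnK //.
  by rewrite -ltnS prednK.
by rewrite sumr_const card_ord -mulr_natl mulf_eq0 negb_or pnatr_eq0 -lt0n m0 expf_neq0.
Qed.

Lemma mup_scaleX (u e : F) : e != 0 -> mup u (e *: 'X - (e * u)%:P) = 1%N.
Proof.
move=> en0.
have -> : e *: 'X - (e * u)%:P = e%:P * ('X - u%:P).
  by rewrite mulrBr -mul_polyC polyCM.
by rewrite mupMr ?rootC // (@mup_XsubCX _ 1) eqxx.
Qed.

Lemma mup_prod (x : F) m (G : 'I_m -> {poly F}) : (forall i, G i != 0) ->
  mup x (\prod_(i < m) G i) = (\sum_(i < m) mup x (G i))%N.
Proof.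
elim: m G => [|m IH] G hG; first by rewrite !big_ord0 mupNroot ?root1.
rewrite !big_ord_recr /= mupM ?hG // ?IH //.
by apply/prodf_neq0 => i _.
Qed.

Lemma prod_homog (nu A B : F) m : m.-primitive_root nu ->
  \prod_(k < m) (nu ^+ k * A - B) = (-1) ^+ m * (B ^+ m - A ^+ m).
Proof.
move=> prim.
have [->|An0] := eqVneq A 0.
  rewrite (eq_bigr (fun _ => - B)); last by move=> i _; rewrite mulr0 sub0r.
  rewrite prodr_const card_ord expr0n.
  have := prim_order_gt0 prim; case: m {prim} => // m _ /=.
  by rewrite subr0 (exprNn B).
rewrite (eq_bigr (fun k : 'I_m => (- A) * (B / A - nu ^+ k))); last first.
  by move=> i _; field.
rewrite big_split /= prodr_const card_ord.
have := congr1 (fun p => p.[B / A]) (factor_Xn_sub_1 prim).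
rewrite horner_prod big_mkord.
move=> h.
have -> : \prod_(i < m) (B / A - nu ^+ i) = ('X^m - 1).[B / A].
  by rewrite -h; apply: eq_bigr => i _; rewrite hornerXsubC.
rewrite !hornerE (exprNn A) expr_div_n.
by field; rewrite expf_neq0.
Qed.

End Gen2.


Section Gen3.
Variable F : numClosedFieldType.

Lemma count_roots (om u : F) m (ts : seq F) : m.-primitive_root om -> u != 0 ->
  count_mem (u ^+ m) (map (fun t => t ^+ m) ts) = (\sum_(k < m) count_mem (om ^+ k * u)%R ts)%N.
Proof.
move=> prim un0; elim: ts => [|t ts IH] /=; first by rewrite big1.
rewrite big_split /= IH; congr (_ + _)%N.
have [htm|htm] := eqVneq (t ^+ m) (u ^+ m).
  have : (t / u) ^+ m = 1 by rewrite expr_div_n htm divff // expf_neq0.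
  case/(prim_rootP prim) => i hi.
  have ht : t = om ^+ i * u by rewrite -hi divfK.
  rewrite (bigD1 i) //= ht eqxx big1 // => k ki.
  rewrite (inj_eq (mulIf un0)) (eq_prim_root_expr prim) !modn_small //.
  have: (i : nat) != k by rewrite (inj_eq val_inj) eq_sym.
  by move/negbTE->.
rewrite big1 // => k _; apply/eqP; rewrite eqb0; apply: contra htm => /eqP ->.
by rewrite exprMn exprAC (prim_expr_order prim) expr1n mul1r.
Qed.

Lemma mup_comp_scale (p : {poly F}) u e : p != 0 -> e != 0 ->
  mup u (p \Po (e *: 'X)) = mup (e * u) p.
Proof.
move=> pn0 en0.
have E : e *: 'X - (e * u)%:P = e%:P * ('X - u%:P).
  by rewrite mulrBr -mul_polyC polyCM.
rewrite (@mup_comp F p (e *: 'X) u (e * u) pn0); last 2 first.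
- by rewrite hornerZ hornerX.
- by rewrite E mulf_neq0 ?polyC_eq0 ?polyXsubC_eq0.
by rewrite mup_scaleX // muln1.
Qed.

End Gen3.


Section Gen4.
Variable F : numClosedFieldType.

Lemma core (q m s1 : nat) (be a z' om : F) (ts : seq F) :
  (0 < q)%N -> (0 < m)%N -> (0 < s1)%N -> coprime s1 m -> m.-primitive_root om ->
  let P := 'X^(q * m + s1) - be *: 'X^s1 - (a * z') *: 'X^(q * m) in
  let G := 'X^s1 * ('X^q - be%:P) ^+ m - (a ^+ m * z' ^+ m) *: 'X^(q * m) in
  0 \notin ts -> (forall z, z != 0 -> count_mem z ts = mup z P) ->
  forall w, w != 0 -> count_mem w (map (fun t => t ^+ m) ts) = mup w G.
Proof.
move=> q0 m0 s0 cop prim P G ts0 hts w wn0.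
have om0 : om != 0.
  apply/eqP => e; have := prim_expr_order prim.
  by rewrite e expr0n (gtn_eqF m0) /= => /esym/eqP; rewrite oner_eq0.
have Pn0 : P != 0.
  apply/negP => /eqP E; have := congr1 (fun p : {poly F} => p`_(q * m + s1)%N) E.
  rewrite /P !coefB !coefZ !coefXn eqxx coef0.
  have -> : (q * m + s1 == s1)%N = false.
    by apply/negbTE; rewrite -{2}[s1]add0n eqn_add2r -lt0n muln_gt0 q0 m0.
  have -> : (q * m + s1 == q * m)%N = false.
    by apply/negbTE; rewrite -{2}[(q * m)%N]addn0 eqn_add2l -lt0n s0.
  by rewrite !mulr0 !subr0 => /eqP; rewrite oner_eq0.
pose H := \prod_(k < m) (P \Po (om ^+ k *: 'X)).
have fn0 : forall k : 'I_m, P \Po (om ^+ k *: 'X) != 0.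
  move=> k; rewrite comp_poly2_eq0 // size_scale ?size_polyX //.
  by rewrite expf_neq0.
have Hn0 : H != 0 by apply/prodf_neq0 => k _.
have eGH : G \Po 'X^m = (-1) ^+ m.+1 *: H.
  apply: poly_ext_horner => x.
  rewrite horner_comp hornerXn hornerZ horner_prod.
  pose A := x ^+ s1 * (x ^+ (q * m) - be).
  pose B := a * z' * x ^+ (q * m).
  pose nu := om ^+ s1.
  have primnu : m.-primitive_root nu by rewrite prim_root_exp_coprime.
  rewrite (eq_bigr (fun k : 'I_m => nu ^+ k * A - B)); last first.
    move=> k _; rewrite horner_comp hornerZ hornerX /P !hornerE.
    have hk : (om ^+ k) ^+ (q * m) = 1.
      rewrite -exprM (_ : (k * (q * m) = m * (k * q))%N); last by ring.
      by rewrite exprM (prim_expr_order prim) expr1n.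
    transitivity ((om ^+ k) ^+ s1 * (x ^+ s1 * (x ^+ (q * m) - be)) - a * z' * x ^+ (q * m)); last by rewrite /nu /B exprAC mulrA.
    rewrite ?exprMn exprD ?exprMn hk exprD.
    move: (om ^+ k ^+ s1) (x ^+ s1) (x ^+ (q * m)) => o y y2; ring.
  rewrite (@prod_homog F nu A B m primnu) /A /B /G !hornerE.
  rewrite -!exprM !(mulnC m) !exprM !exprMn.
  have s2 : (-1) ^+ m.+1 * (-1) ^+ m = -1 :> F.
    by rewrite exprS -mulrA -expr2 -exprM mulnC exprM sqrrN !expr1n mulr1.
  move: (x ^+ s1 ^+ m * (x ^+ q ^+ m - be) ^+ m) (a ^+ m * z' ^+ m * x ^+ q ^+ m ^+ m) => Y Z.
  transitivity (-1 * (Z - Y)); first by ring.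
  by congr (_ * _); exact: (esym s2).
have sn0 : (-1) ^+ m.+1 != 0 :> F by rewrite signr_eq0.
have Gn0 : G != 0.
  apply/negP => /eqP G0; move: eGH; rewrite G0 comp_poly0 => /esym/eqP.
  by rewrite scaler_eq0 (negbTE sn0) (negbTE Hn0).
pose u := m.-root w.
have hu : u ^+ m = w by rewrite /u rootCK.
have un0 : u != 0 by rewrite /u rootC_eq0.
rewrite -hu (@count_roots F om u m ts prim un0).
have Xn0 : 'X^m - (u ^+ m)%:P != 0 by rewrite -size_poly_eq0 size_XnsubC.
rewrite -[mup (u ^+ m) G]muln1 -(@mup_Xn F u m un0 m0) -mup_comp ?hornerXn //.
rewrite eGH -mul_polyC mupMr ?rootC // mup_prod //.
apply: eq_bigr => k _.
rewrite mup_comp_scale ?expf_neq0 // hts // mulf_neq0 ?expf_neq0 //.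
Qed.

End Gen4.


Section Tr.
Variable R : realType.

Lemma expID (a b : R) : expI a * expI b = expI (a + b).
Proof.
rewrite /expI cosD sinD; apply/eqP; rewrite eq_complex /=; apply/andP; split; apply/eqP; ring.
Qed.

Lemma expI0 : expI (0 : R) = 1.
Proof. by rewrite /expI cos0 sin0. Qed.

Lemma expIX (a : R) n : expI a ^+ n = expI (n%:R * a).
Proof.
elim: n => [|n IH]; first by rewrite expr0 mul0r expI0.
by rewrite exprS IH expID -natr1 mulrDl mul1r addrC.
Qed.

Lemma expI_neq1 (t : R) : 0 < t < pi *+ 2 -> expI t != 1.
Proof.
case/andP => t0 t2; apply/negP => /eqP E.
have : sin t = 0 /\ cos t = 1.
  by move: E => /eqP; rewrite eq_complex /= => /andP[/eqP -> /eqP ->].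
case => st ct.
have [tp|tp|tp] := ltgtP t pi.
- by have := @sin_gt0_pi R t; rewrite st t0 tp ltxx => /(_ isT).
- have : 0 < sin (t - pi).
    apply: sin_gt0_pi; rewrite subr_gt0 tp /= ltrBlDr -mulr2n //.
  have := sinDpi (t - pi); rewrite subrK st => /eqP; rewrite eq_sym oppr_eq0 => /eqP ->.
  by rewrite ltxx.
- by move: ct; rewrite tp cospi; lra.
Qed.

Lemma expI_prim m : (0 < m)%N -> m.-primitive_root (expI (pi *+ 2 / m%:R) : R[i]).
Proof.
move=> m0; apply/andP; split => //; apply/forallP => i; apply/eqP.
rewrite unity_rootE expIX.
have mR : m%:R != 0 :> R by rewrite pnatr_eq0 -lt0n.
case: (ltngtP i.+1 m) => h.
- apply/negbTE/expI_neq1.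
  have pi2 : 0 < pi *+ 2 :> R by rewrite pmulrn_lgt0 ?pi_gt0.
  have m0' : 0 < m%:R :> R by rewrite ltr0n.
  apply/andP; split.
    by rewrite mulr_gt0 ?divr_gt0 ?ltr0n.
  rewrite mulrCA gtr_pMr // ltr_pdivrMr // mul1r ltr_nat //.
- by move: (ltn_ord i); rewrite ltnNge -ltnS h.
- rewrite h mulrCA mulfV // mulr1.
  by rewrite /expI cos2pi sin2pi; apply/eqP.
Qed.

End Tr.


Theorem lemma4p4 (R : realType) (n p q r s : nat) (alpha : R) (j : nat)
  (ts : seq R[i]) :
  farey_pair n p q r s -> (2 <= q)%N ->
  let d := (n %/ q)%N in
  let delta := gcdn d s in
  let d1 := (d %/ delta)%N in
  let s1 := (s %/ delta)%N in
  0 <= alpha <= 1 -> (j < delta)%N ->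
  let ghat := ghat_num q d1 s1 alpha
                (expI (2 * pi * j%:R / (delta * d1)%:R)) in
  let g := g_num q d1 s1 alpha (expI (2 * pi * j%:R / delta%:R)) in
  (0 \notin ts) -> (forall z : R[i], z != 0 -> count_mem z ts = mup z ghat) ->
  forall w : R[i], w != 0 ->
    count_mem w (map (fun t => t ^+ d1) ts) = mup w g.
Proof.
move=> [[/andP[_ qn] _] [/andP[rs _] _] _ _] q2 d delta d1 s1 _ _ ghat g ts0 hts w wn0.
have q0 : (0 < q)%N by apply: leq_trans q2.
have d0 : (0 < d)%N by rewrite /d divn_gt0.
have s0 : (0 < s)%N by apply: leq_ltn_trans rs.
have de0 : (0 < delta)%N by rewrite /delta gcdn_gt0 d0.
have dd : d = (d1 * delta)%N by rewrite /d1 divnK // /delta dvdn_gcdl.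
have sd : s = (s1 * delta)%N by rewrite /s1 divnK // /delta dvdn_gcdr.
have d10 : (0 < d1)%N by move: d0; rewrite dd muln_gt0 => /andP[].
have s10 : (0 < s1)%N by move: s0; rewrite sd muln_gt0 => /andP[].
have cop : coprime s1 d1.
  have := muln_gcdl s1 d1 delta; rewrite -sd -dd (gcdnC s d) -/delta.
  move=> /eqP; rewrite -{2}[delta]mul1n eqn_pmul2r //.
pose om : R[i] := expI (pi *+ 2 / d1%:R).
have prim : d1.-primitive_root om by apply: expI_prim.
pose z' : R[i] := expI (2 * pi * j%:R / (delta * d1)%:R).
have hz : expI (2 * pi * j%:R / delta%:R) = z' ^+ d1.
  rewrite /z' expIX; congr expI; rewrite natrM.
  have : d1%:R != 0 :> R by rewrite pnatr_eq0 -lt0n.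
  have : delta%:R != 0 :> R by rewrite pnatr_eq0 -lt0n.
  by move: (d1%:R : R) (delta%:R : R) => x y h1 h2; field; rewrite h1 h2.
have eg : g = 'X^s1 * ('X^q - (real_complex R (1 - alpha))%:P) ^+ d1
   - ((real_complex R alpha) ^+ d1 * z' ^+ d1) *: 'X^(q * d1).
  by rewrite /g /g_num hz rmorphXn.
rewrite eg.
exact: (@core _ q d1 s1 (real_complex R (1 - alpha)) (real_complex R alpha) z' om ts q0 d10 s10 cop prim ts0 hts w wn0).
Qed.
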